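(* Let $\sigma(u)=1/(1+e^{-u})$, $\sigma_\tau(u)=\sigma(u/\tau)$ for $\tau>0$, let $z$ be a standard logistic random variable, $\eta\in\mathbb{R}$, and $\mathcal L:[0,1]\to\mathbb{R}$ continuously differentiable. Let $\hat G_\tau=\frac{d}{d\eta}\mathcal L(\sigma_\tau(\eta-z))$ be the Gumbel-Softmax gradient estimator. Then $\mathrm{Var}_z(\hat G_\tau)=O(1/\tau)$ as $\tau\to0^+$. *)

(* Defs.v *)
From HB Require Import structures.
From mathcomp Require Import all_boot all_order all_algebra.
From mathcomp Require Import all_classical all_reals all_analysis.
Set Implicit Arguments. Unset Strict Implicit. Unset Printing Implicit Defensive.
Import Order.TTheory GRing.Theory Num.Theory.
Import numFieldNormedType.Exports.
Local Open Scope classical_set_scope.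
Local Open Scope ring_scope.

Definition sigmoid {R : realType} (u : R) : R := (1 + expR (- u))^-1.

Definition sigmoid_tau {R : realType} (tau u : R) : R := sigmoid (u / tau).

Definition logistic_pdf {R : realType} (x : R) : R :=
  expR (- x) / (1 + expR (- x)) ^+ 2.

Definition logistic_E {R : realType} (f : R -> R) : \bar R :=
  (\int[@lebesgue_measure R]_x (f x * logistic_pdf x)%:E)%E.

Definition logistic_Var {R : realType} (f : R -> R) : \bar R :=
  let m := fine (logistic_E f) in logistic_E (fun x => (f x - m) ^+ 2).

Definition GS_estimator {R : realType} (L : R -> R) (tau eta z : R) : R :=
  derive1 (fun e => L (sigmoid_tau tau (e - z))) eta.

(* Main.v *)
Require Import Defs.
From HB Require Import structures.
From mathcomp Require Import all_boot all_order all_algebra.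
From mathcomp Require Import all_classical all_reals all_analysis.
From mathcomp Require Import ring lra measurable_realfun.
Import Order.TTheory GRing.Theory Num.Theory.
Import numFieldNormedType.Exports.
Local Open Scope classical_set_scope.
Local Open Scope ring_scope.

Section S.
Context {R : realType}.

Lemma sig_gt0 (x : R) : 0 < sigmoid x.
Proof. by rewrite /sigmoid invr_gt0 addr_gt0 ?expR_gt0. Qed.

Lemma sig_lt1 (x : R) : sigmoid x < 1.
Proof. by rewrite /sigmoid invf_lt1 ?ltrDl ?expR_gt0 ?addr_gt0 ?expR_gt0. Qed.

Lemma sigN (x : R) : sigmoid (- x) = 1 - sigmoid x.
Proof.
rewrite /sigmoid opprK expRN.
have e0 := expR_gt0 x.
have h1 : 1 + expR x != 0 by rewrite gt_eqF // addr_gt0.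
have h2 : 1 + (expR x)^-1 != 0 by rewrite gt_eqF // addr_gt0 ?invr_gt0.
have h3 : expR x != 0 by rewrite gt_eqF.
move: h1 h2 h3; generalize (expR x) => e h1 h2 h3.
by field; rewrite h3 addrC h1.
Qed.

Lemma pdf_sig (x : R) : logistic_pdf x = sigmoid x * (1 - sigmoid x).
Proof.
rewrite /logistic_pdf /sigmoid.
have e0 := expR_gt0 (- x).
have h : 1 + expR (- x) != 0 by rewrite gt_eqF // addr_gt0.
move: h; generalize (expR (- x)) => e h.
by field.
Qed.


Lemma sig_derive (x : R) : is_derive x 1 (@sigmoid R) (logistic_pdf x).
Proof.
have hE : is_derive x 1 (fun y : R => expR (- y)) (expR (- x) * -1).
  exact: (@is_derive1_comp _ expR (-%R)).
have hF : is_derive x 1 (fun y : R => 1 + expR (- y)) (expR (- x) * -1).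
  have := is_deriveD (is_derive_cst (1:R) x 1) hE.
  by rewrite add0r.
have h : 1 + expR (- x) != 0 by rewrite gt_eqF // addr_gt0 ?expR_gt0.
have H := @is_deriveV R (fun y : R => 1 + expR (- y)) x _ 1 h hF.
have -> : logistic_pdf x = - (1 + expR (- x)) ^- 2 *: (expR (- x) * -1).
  rewrite /logistic_pdf /=.
move: h; generalize (expR (- x)) => e h.
  rewrite /GRing.scale /=.
  by field.
exact: H.
Qed.

Lemma sig_cont : continuous (@sigmoid R).
Proof.
move=> x; apply: differentiable_continuous; apply/derivable1_diffP.
by case: (sig_derive x).
Qed.

Lemma sig_cvgy : (@sigmoid R) x @[x --> +oo] --> (1:R).
Proof.
rewrite -[X in _ --> X]invr1.
apply: cvgV; first exact: oner_neq0.
rewrite -[X in _ --> X]addr0.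
apply: cvgD; first exact: cvg_cst.
exact: cvgr_expR.
Qed.

Lemma sig_cvgNy : (@sigmoid R) x @[x --> -oo] --> (0:R).
Proof.
apply/cvgNy_compNP.
have -> : (@sigmoid R \o -%R) = (fun x => 1 - sigmoid x).
  by apply/funext => x /=; rewrite sigN.
have := cvgB (cvg_cst (1:R)) sig_cvgy.
by rewrite subrr; apply.
Qed.


Lemma FTC_R (f F : R -> R) (a b : R) :
  (forall x, 0 <= f x) -> continuous f ->
  (forall x : R, is_derive x (1:R) F (f x)) ->
  F x @[x --> -oo] --> a -> F x @[x --> +oo] --> b ->
  (\int[@lebesgue_measure R]_x (f x)%:E = (b - a)%:E)%E.
Proof.
move=> f0 cf dF Fa Fb.
have mf : measurable_fun [set: R] f by exact: continuous_measurable_fun.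
have cF : continuous F.
  by move=> x; apply: differentiable_continuous; apply/derivable1_diffP; case: (dF x).
have mposnums : measurable [set x : R | 0 <= x] by rewrite -set_itvcy.
rewrite -(setUv [set x : R | 0 <= x]) ge0_integral_setU//= ; last 4 first.
  exact: measurableC.
  by apply/measurable_EFinP; rewrite setUv.
  by move=> x _; rewrite lee_fin.
  exact/disj_setPCl.
have -> : (\int[lebesgue_measure]_(x in [set x : R | (0 <= x)%R]) (f x)%:E = b%:E - (F 0)%:E)%E.
  rewrite -set_itvcy.
  apply: ge0_continuous_FTC2y => //.
  - exact: continuous_subspaceT.
  - exact: cvg_at_right_filter (cF 0).
  - by move=> x _; rewrite derive1E; case: (dF x).
rewrite -set_itvcy setCitvr.
rewrite integral_itv_bndo_bndc; last exact/measurable_EFinP/measurable_funTS.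

rewrite -[X in `]-oo, X]]oppr0 ge0_integration_by_substitutionNy//; last first.
  exact: continuous_subspaceT.
have dG : forall x : R, is_derive x (1:R) (fun y => - F (- y)) (f (- x)).
  move=> x.
  have H1 : is_derive x 1 (F \o -%R) (f (- x) * -1).
    apply: is_derive1_comp; exact: dF.
  have := is_deriveN H1.
  by rewrite mulrN1 opprK.
rewrite (@ge0_continuous_FTC2y _ (f \o -%R) (fun y => - F (- y)) 0 (- a)) //=.
- by rewrite oppr0 opprK -!EFinD; congr EFin; ring.
- apply: continuous_subspaceT => x; apply: continuous_comp; [exact: opp_continuous | exact: cf].
- exact: (cvgNy_compNP _ _).1 (cvgN Fa).
- apply: cvg_at_right_filter => /=.
  have := (dG 0); case=> /derivable1_diffP /differentiable_continuous H _; exact: H.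
- by move=> x _; rewrite derive1E; case: (dG x).
Qed.


Lemma pdf_ge0 (x : R) : 0 <= logistic_pdf x.
Proof. by rewrite pdf_sig mulr_ge0 // ?subr_ge0 ltW // ?sig_gt0 ?sig_lt1. Qed.

Lemma pdf_le (x : R) : logistic_pdf x <= 4^-1.
Proof.
rewrite pdf_sig; set s := sigmoid x.
have h : 0 <= (s - 2^-1) ^+ 2 by apply: sqr_ge0.
have -> : (4 : R)^-1 = 2^-1 * 2^-1 by rewrite -invfM; congr (_^-1); rewrite -natrM.
nra.
Qed.

Lemma pdfN (x : R) : logistic_pdf (- x) = logistic_pdf x.
Proof. by rewrite !pdf_sig sigN; ring. Qed.

Lemma pdf_cont : continuous (@logistic_pdf R).
Proof.
have -> : @logistic_pdf R = (fun x => sigmoid x * (1 - sigmoid x)).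
  by apply/funext => x; rewrite pdf_sig.
move=> x; apply: continuousM; first exact: sig_cont.
apply: continuousB; first exact: cvg_cst.
exact: sig_cont.
Qed.

Lemma int_pdf : (\int[@lebesgue_measure R]_x (logistic_pdf x)%:E = 1%:E)%E.
Proof.
rewrite -[1]subr0; apply: FTC_R.
- exact: pdf_ge0.
- exact: pdf_cont.
- exact: sig_derive.
- exact: sig_cvgNy.
- exact: sig_cvgy.
Qed.

Lemma lin_derive (c t x : R) : t != 0 ->
  is_derive x (1:R) (fun y : R => (y - c) / t) t^-1.
Proof.
move=> t0.
have H1 : is_derive x (1:R) (fun y : R => y - c) 1.
  have := is_deriveB (is_derive_id x (1:R)) (is_derive_cst c x (1:R)).
  by rewrite subr0.
have := is_deriveM H1 (is_derive_cst t^-1 x (1:R)).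
by rewrite /GRing.scale /= mulr0 add0r mulr1.
Qed.

Lemma int_q (t c : R) : 0 < t ->
  (\int[@lebesgue_measure R]_x (logistic_pdf ((x - c) / t))%:E = t%:E)%E.
Proof.
move=> t0.
have tn0 : t != 0 by rewrite gt_eqF.
rewrite (_ : t%:E = (t * 1 - t * 0)%:E); last by rewrite mulr1 mulr0 subr0.
have lim1 : (fun y : R => (y - c) / t) x @[x --> +oo] --> +oo.
  apply/cvgryPge => A.
  apply: filterS (nbhs_pinfty_ge (num_real (A * t + c))) => x hx.
  by rewrite ler_pdivlMr // lerBrDr.
have lim2 : (fun y : R => (y - c) / t) x @[x --> -oo] --> -oo.
  apply/cvgrNyPle => A.
  apply: filterS (nbhs_ninfty_le (num_real (A * t + c))) => x hx.
  by rewrite ler_pdivrMr // lerBlDr.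
apply: (@FTC_R _ (fun x => t * sigmoid ((x - c) / t))).
- by move=> x; exact: pdf_ge0.
- move=> x; apply: (@continuous_comp _ _ _ (fun y : R => (y - c) / t) logistic_pdf); last exact: pdf_cont.
  by apply: differentiable_continuous; apply/derivable1_diffP; case: (lin_derive c t x tn0).
- move=> x.
  have H := @is_derive1_comp R sigmoid (fun y : R => (y - c) / t) x _ _ (sig_derive ((x - c) / t)) (lin_derive c t x tn0).
  have := is_deriveM (is_derive_cst t x (1:R)) H.
  rewrite /GRing.scale /= mulr0 addr0 mulrCA mulfV // mulr1.
  exact.
- apply: cvgM; first exact: cvg_cst.
  exact: (cvg_comp _ _ lim2 sig_cvgNy).
- apply: cvgM; first exact: cvg_cst.
  exact: (cvg_comp _ _ lim1 sig_cvgy).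
Qed.


Lemma contM (f g : R -> R) : continuous f -> continuous g ->
  continuous (fun x => f x * g x).
Proof. by move=> cf cg x; apply: cvgM; [exact: cf | exact: cg]. Qed.

Lemma contD (f g : R -> R) : continuous f -> continuous g ->
  continuous (fun x => f x + g x).
Proof. by move=> cf cg x; apply: cvgD; [exact: cf | exact: cg]. Qed.

Lemma contB (f : R -> R) (c : R) : continuous f ->
  continuous (fun x => f x - c).
Proof. by move=> cf x; apply: cvgB; [exact: cf | exact: cvg_cst]. Qed.

Lemma contC (c : R) : continuous (fun _ : R => c).
Proof. by move=> x; exact: cvg_cst. Qed.

Lemma cm (f : R -> R) : continuous f -> measurable_fun [set: R] (fun x => (f x)%:E).
Proof. by move=> cf; apply/measurable_EFinP; exact: continuous_measurable_fun. Qed.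

Lemma GS_formula (L dL : R -> R) (hdL : forall x : R, 0 < x < 1 -> is_derive x 1 L (dL x))
  (t eta z : R) : 0 < t ->
  GS_estimator L t eta z =
    dL (sigmoid ((eta - z) / t)) * (logistic_pdf ((z - eta) / t) / t).
Proof.
move=> t0; have tn0 : t != 0 by rewrite gt_eqF.
have H1 := @is_derive1_comp R sigmoid (fun y : R => (y - z) / t) eta _ _
  (sig_derive ((eta - z) / t)) (lin_derive z t eta tn0).
have hs : 0 < sigmoid ((eta - z) / t) < 1 by rewrite sig_gt0 sig_lt1.
have H2 := @is_derive1_comp R L (sigmoid \o (fun y : R => (y - z) / t)) eta _ _
  (hdL _ hs) H1.
rewrite /GS_estimator /sigmoid_tau derive1E.
have -> : (fun e => L (sigmoid ((e - z) / t))) =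
   (L \o (sigmoid \o (fun y : R => (y - z) / t))) by [].
case: H2 => _ -> /=.
have -> : (z - eta) / t = - ((eta - z) / t) by rewrite -mulNr opprB.
by rewrite pdfN.
Qed.


Lemma key (G m q p M t : R) : 0 < t -> 0 <= M -> `|G| <= M * q / t ->
  0 <= q -> q <= 4^-1 -> 0 <= p -> p <= 4^-1 -> `|m| <= M / 4 ->
  (G - m) ^+ 2 * p <= (M ^+ 2 / (8 * t ^+ 2)) * q + (M ^+ 2 / 8) * p.
Proof.
move=> t0 M0 hG q0 q4 p0 p4 hm.
set u := M / t.
have u0 : 0 <= u by rewrite divr_ge0 // ltW.
have e1 : M ^+ 2 / (8 * t ^+ 2) = u ^+ 2 / 8.
  rewrite /u; have tn : t != 0 by rewrite gt_eqF.
  by field; rewrite tn.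
rewrite e1.
have hG' : `|G| <= u * q by rewrite /u mulrAC.
clearbody u.
have g2 : G ^+ 2 <= (u * q) ^+ 2.
  rewrite -real_normK ?num_real //; apply: lerXn2r; rewrite ?nnegrE ?normr_ge0 ?mulr_ge0 //.
have m2 : m ^+ 2 <= (M / 4) ^+ 2.
  rewrite -real_normK ?num_real //; apply: lerXn2r; rewrite ?nnegrE ?normr_ge0 ?divr_ge0 //.
have s1 : (G - m) ^+ 2 <= 2 * G ^+ 2 + 2 * m ^+ 2.
  rewrite -subr_ge0.
  have -> : 2 * G ^+ 2 + 2 * m ^+ 2 - (G - m) ^+ 2 = (G + m) ^+ 2 by ring.
  exact: sqr_ge0.
have s2 : (G - m) ^+ 2 <= u ^+ 2 * q / 2 + M ^+ 2 / 8.
  have h4 : q * q <= q / 4 by nra.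
  have h5 : u ^+ 2 * (q * q) <= u ^+ 2 * (q / 4) by apply: ler_wpM2l; rewrite ?sqr_ge0.
  lra.
have uq : 0 <= u ^+ 2 * q by rewrite mulr_ge0 ?sqr_ge0.
nra.
Qed.

End S.

Theorem propositionE4 (R : realType) (L dL : R -> R) (eta : R)
  (hdL : forall x : R, 0 < x < 1 -> is_derive x 1 L (dL x))
  (hcont : {within `[0, 1], continuous dL}) :
  exists C : R, exists delta : R, 0 < delta /\
    forall tau : R, 0 < tau -> tau < delta ->
      (logistic_Var (GS_estimator L tau eta) <= (C / tau)%:E)%E.
Proof.
have [c1 c1in hc1] := EVT_max (@ler01 R) hcont.
have [c2 c2in hc2] := EVT_min (@ler01 R) hcont.
set M : R := `|dL c1| + `|dL c2|.
have M0 : 0 <= M by rewrite addr_ge0.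
have hM : forall y : R, 0 < y < 1 -> `|dL y| <= M.
  move=> y /andP[y0 y1].
  have yin : y \in `[(0:R), 1] by rewrite in_itv /= !ltW.
  have h1 := hc1 _ yin; have h2 := hc2 _ yin.
  have a1 := ler_norm (dL c1).
  have := lexx `|dL c2|; rewrite ler_norml => /andP[a2 _].
  have n1 := normr_ge0 (dL c1); have n2 := normr_ge0 (dL c2).
  rewrite ler_norml; apply/andP; split; rewrite /M; lra.
have [cin _ _] := (continuous_within_itvP _ (@ltr01 R)).1 hcont.
exists (M ^+ 2 / 4), 1; split; first exact: ltr01.
move=> t t0 t1.
have tn0 : t != 0 by rewrite gt_eqF.
set G := GS_estimator L t eta.
set q := fun z => logistic_pdf ((z - eta) / t).
have HG : forall z, G z = dL (sigmoid ((eta - z) / t)) * (q z / t).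
  by move=> z; rewrite /G (@GS_formula R L dL hdL t eta z t0).
have q0 z : 0 <= q z by exact: pdf_ge0.
have q4 z : q z <= 4^-1 by exact: pdf_le.
have hGb z : `|G z| <= M * q z / t.
  rewrite HG normrM (ger0_norm (divr_ge0 (q0 z) (ltW t0))) -mulrA.
  apply: ler_wpM2r; first by rewrite divr_ge0 // ltW.
  by apply: hM; rewrite sig_gt0 sig_lt1.
have cq : continuous q.
  move=> z; apply: (@continuous_comp _ _ _ (fun y : R => (y - eta) / t) logistic_pdf); last exact: pdf_cont.
  by apply: differentiable_continuous; apply/derivable1_diffP; case: (lin_derive eta t z tn0).
have cG : continuous G.
  have -> : G = fun z => dL (sigmoid ((eta - z) / t)) * (q z / t) by apply/funext.
  move=> z; apply: (@continuousM R _ (fun z => dL (sigmoid ((eta - z) / t))) (fun z => q z / t) z); last first.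
    by apply: (@continuousM R _ q (fun=> t^-1) z); [exact: cq | exact: cvg_cst].
  apply: (@continuous_comp _ _ _ (fun z => sigmoid ((eta - z) / t)) dL); last first.
    by apply: cin; rewrite in_itv /= sig_gt0 sig_lt1.
  have -> : (fun z => sigmoid ((eta - z) / t)) = sigmoid \o (fun y : R => (y - eta) / (- t)).
    by apply/funext => y /=; rewrite invrN mulrN -mulNr opprB.
  have tn0' : - t != 0 by rewrite oppr_eq0.
  apply: continuous_comp; last exact: sig_cont.
  by apply: differentiable_continuous; apply/derivable1_diffP; case: (lin_derive eta (- t) z tn0').
have hq0 : forall x, [set: R] x -> (0 <= (q x)%:E)%E by move=> x _; rewrite lee_fin.
have mq : measurable_fun [set: R] (fun x => (q x)%:E) by exact: cm.
set p := @logistic_pdf R.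
have hp0 : forall x, [set: R] x -> (0 <= (p x)%:E)%E by move=> x _; rewrite lee_fin pdf_ge0.
have cp : continuous p by exact: pdf_cont.
have mp : measurable_fun [set: R] (fun x => (p x)%:E) by exact: cm.
set m := fine (logistic_E G).
have hm : `|m| <= M / 4.
  have hE : (`|logistic_E G| <= (M / 4)%:E)%E.
    rewrite /logistic_E.
    have mGp : measurable_fun [set: R] (fun x => (G x * p x)%:E).
      by apply: cm => x; apply: (@continuousM R _ G p x); [exact: cG | exact: cp].
    have := le_abse_integral (@lebesgue_measure R) measurableT mGp.
    move=> H0; apply: (le_trans H0).
    have H1 : (\int[lebesgue_measure]_x `|(G x * p x)%:E| <=
               \int[lebesgue_measure]_x ((M / (4 * t) * q x)%:E))%E.
      apply: ge0_le_integral => //.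
      - apply: (@cm R (fun x => `|G x * p x|)) => x.
        apply: (@continuous_comp _ _ _ (fun x => G x * p x) (@Num.norm _ R)); last exact: norm_continuous.
        by apply: (@continuousM R _ G p x); [exact: cG | exact: cp].
      - apply: (@cm R (fun x => M / (4 * t) * q x)) => x.
        by apply: (@continuousM R _ (fun=> M / (4 * t)) q x); [exact: cvg_cst | exact: cq].
      - move=> x _ /=; rewrite lee_fin normrM (ger0_norm (pdf_ge0 x)).
        apply: le_trans.
          apply: ler_wpM2l; [exact: normr_ge0 | exact: pdf_le].
        apply: le_trans.
          apply: ler_wpM2r; [by [] | exact: hGb].
        have -> : M * q x / t * 4^-1 = M / (4 * t) * q x.
          by field; rewrite tn0.
        by [].
    apply: (le_trans H1).
    under eq_integral do rewrite EFinM.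
    have k0 : 0 <= M / (4 * t) by rewrite divr_ge0 // mulr_ge0 // ltW.
    have E1 := ge0_integralZl_EFin (@lebesgue_measure R) measurableT hq0 mq k0.
    simpl in E1; rewrite E1.
    rewrite /q int_q // -EFinM lee_fin.
    have -> : M / (4 * t) * t = M / 4 by field; rewrite tn0.
    by [].
  move: hE; rewrite /m; case: (logistic_E G) => [r| |] /=.
  - by rewrite lee_fin.
  - by rewrite normr0 divr_ge0.
  - by rewrite normr0 divr_ge0.
rewrite /logistic_Var /= -/m.
set A := M ^+ 2 / (8 * t ^+ 2).
set B := M ^+ 2 / 8.
have A0 : 0 <= A by rewrite divr_ge0 ?sqr_ge0 // mulr_ge0 // sqr_ge0.
have B0 : 0 <= B by rewrite divr_ge0 ?sqr_ge0.
apply: (@le_trans _ _ (\int[lebesgue_measure]_x ((A * q x)%:E + (B * p x)%:E))%E).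
  apply: ge0_le_integral => //.
  - by move=> x _; rewrite lee_fin mulr_ge0 ?sqr_ge0 ?pdf_ge0.
  - apply: (@cm R (fun x => (G x - m) ^+ 2 * p x)).
    apply: (@contM R (fun x => (G x - m) ^+ 2) p) => //.
    have -> : (fun x => (G x - m) ^+ 2) = (fun x => (G x - m) * (G x - m)).
      by apply/funext => x; rewrite expr2.
    by apply: contM; apply: contB.
  - apply: (@cm R (fun x => A * q x + B * p x)).
    by apply: contD; apply: contM => //; apply: contC.
  - move=> x _; rewrite -EFinD lee_fin.
    exact: (key (G x) m (q x) (p x) M t t0 M0 (hGb x) (q0 x) (q4 x) (pdf_ge0 x) (pdf_le x) hm).
have hAq : forall x, [set: R] x -> (0 <= (A * q x)%:E)%E by move=> x _; rewrite lee_fin mulr_ge0.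
have hBp : forall x, [set: R] x -> (0 <= (B * p x)%:E)%E.
  by move=> x _; rewrite lee_fin mulr_ge0 //; exact: pdf_ge0.
have mAq : measurable_fun [set: R] (fun x => (A * q x)%:E).
  by apply: (@cm R (fun x => A * q x)); apply: contM => //; apply: contC.
have mBp : measurable_fun [set: R] (fun x => (B * p x)%:E).
  by apply: (@cm R (fun x => B * p x)); apply: contM => //; apply: contC.
have E2 := ge0_integralD (@lebesgue_measure R) measurableT hAq mAq hBp mBp.
simpl in E2; rewrite E2.
under eq_integral do rewrite EFinM.
have E3 := ge0_integralZl_EFin (@lebesgue_measure R) measurableT hq0 mq A0.
simpl in E3; rewrite E3.
under [X in (_ + X)%E]eq_integral do rewrite EFinM.
have E4 := ge0_integralZl_EFin (@lebesgue_measure R) measurableT hp0 mp B0.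
simpl in E4; rewrite E4.
rewrite /q int_q // /p int_pdf -!EFinM -EFinD lee_fin.
rewrite /A /B.
have -> : M ^+ 2 / (8 * t ^+ 2) * t + M ^+ 2 / 8 * 1 = M ^+ 2 / 8 / t + M ^+ 2 / 8.
  by field; rewrite tn0.
have h8 : M ^+ 2 / 8 <= M ^+ 2 / 8 / t.
  rewrite ler_pdivlMr //.
  have : 0 <= M ^+ 2 / 8 by rewrite divr_ge0 ?sqr_ge0.
  move: (M ^+ 2 / 8) => c c0; nra.
have -> : M ^+ 2 / 4 / t = M ^+ 2 / 8 / t + M ^+ 2 / 8 / t by field; rewrite tn0.
by rewrite lerD2l.
Qed.
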